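(* Let $m\ge 1$ and let $\vec f=(f_1,\dots,f_m)\in\mathbb{R}^m$ have pairwise distinct components. Define the Gibbs weights $w_\alpha:=e^{f_\alpha}/\sum_{\beta=1}^m e^{f_\beta}$, $\alpha=1,\dots,m$. Let $\delta\vec f=(\delta f_1,\dots,\delta f_m)\in\mathbb{R}^m$ be arbitrary, and regard $\vec f$ and $\delta\vec f$ as a pair of random variables with joint probability $w(f_\alpha,\delta f_\beta)=\delta_{\alpha\beta}w_\alpha$ (i.e. the index $\alpha$ is drawn with probability $w_\alpha$ and both variables take their $\alpha$-th value). Call them totally uncorrelated if for all natural numbers $u,v$ $$\sum_{\alpha=1}^m w_\alpha f_\alpha^{u}(\delta f_\alpha)^{v}-\Big(\sum_{\alpha=1}^m w_\alpha f_\alpha^{u}\Big)\Big(\sum_{\alpha=1}^m w_\alpha (\delta f_\alpha)^{v}\Big)=0.$$ Then $\vec f$ and $\delta\vec f$ are totally uncorrelated if and only if $\delta\vec f$ is proportional to $(1,\dots,1)$.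
   Context: Here $\delta_{\alpha\beta}$ is the Kronecker delta. The vector $\vec f$ represents the values $f_\alpha(\boldsymbol{x})$ of the functions defining a statistical hypersurface $x_{n+1}=\ln\sum_\alpha e^{f_\alpha(\boldsymbol{x})}$ at a point, and $\delta\vec f$ an infinitesimal variation of these values; only the finite-dimensional statement above is needed. *)

(* Defs.v *)
From mathcomp Require Import all_boot all_order all_algebra.
From mathcomp Require Import reals sequences exp.
Set Implicit Arguments. Unset Strict Implicit. Unset Printing Implicit Defensive.
Import Order.TTheory GRing.Theory Num.Theory.
Local Open Scope ring_scope.

Definition gibbs (R : realType) (m : nat) (f : 'I_m -> R) (a : 'I_m) : R :=
  expR (f a) / \sum_(b < m) expR (f b).

Definition totally_uncorrelated (R : realType) (m : nat) (f df : 'I_m -> R) : Prop :=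
  forall u v : nat,
    \sum_(a < m) gibbs f a * f a ^+ u * df a ^+ v
    - (\sum_(a < m) gibbs f a * f a ^+ u) * (\sum_(a < m) gibbs f a * df a ^+ v) = 0.

(* Main.v *)
Require Import Defs.
From mathcomp Require Import all_boot all_order all_algebra.
From mathcomp Require Import reals sequences exp.
Local Open Scope ring_scope.
Import Order.TTheory GRing.Theory Num.Theory.

Lemma S_gt0 (R : realType) (m : nat) (f : 'I_m -> R) : (1 <= m)%N ->
  0 < \sum_(b < m) expR (f b).
Proof.
case: m f => [//|n] f _.
rewrite big_ord_recl; apply: ltr_pwDl; first exact: expR_gt0.
by apply: sumr_ge0 => i _; apply/ltW/expR_gt0.
Qed.

Lemma sum_gibbs (R : realType) (m : nat) (f : 'I_m -> R) : (1 <= m)%N ->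
  \sum_(a < m) gibbs f a = 1.
Proof.
move=> hm; rewrite /gibbs -mulr_suml divff //.
by rewrite gt_eqF // S_gt0.
Qed.

Lemma gibbs_gt0 (R : realType) (m : nat) (f : 'I_m -> R) a : (1 <= m)%N ->
  0 < gibbs f a.
Proof. by move=> hm; rewrite /gibbs divr_gt0 // ?expR_gt0 // S_gt0. Qed.

Lemma moment_prod (R : realType) (m : nat) (f g : 'I_m -> R) :
  (forall u, \sum_(i < m) g i * f i ^+ u = 0) ->
  forall (r : seq 'I_m) u,
  \sum_(i < m) g i * f i ^+ u * \prod_(j <- r) (f i - f j) = 0.
Proof.
move=> H; elim=> [|j r IH] u.
  by under eq_bigr do rewrite big_nil mulr1; apply: H.
under eq_bigr do rewrite big_cons mulrA mulrBr mulrBl.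
rewrite sumrB.
have -> : \sum_(i < m) g i * f i ^+ u * f i * \prod_(j0 <- r) (f i - f j0)
  = \sum_(i < m) g i * f i ^+ u.+1 * \prod_(j0 <- r) (f i - f j0).
  by apply: eq_bigr => i _; rewrite exprSr mulrA.
rewrite IH sub0r.
under eq_bigr do rewrite -mulrA [f j * _]mulrC mulrA.
by rewrite -mulr_suml IH mul0r oppr0.
Qed.

Theorem proposition3p1 (R : realType) (m : nat) (f df : 'I_m -> R) :
  (1 <= m)%N ->
  (forall a b : 'I_m, a != b -> f a != f b) ->
  totally_uncorrelated f df <-> exists c : R, forall a : 'I_m, df a = c.
Proof.
move=> hm hf; split.
  move=> H.
  pose c := \sum_(a < m) gibbs f a * df a ^+ 1.
  exists c.
  pose g := fun i => gibbs f i * (df i - c).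
  have Hg : forall u, \sum_(i < m) g i * f i ^+ u = 0.
    move=> u; have := H u 1%N.
    rewrite -/c => E.
    rewrite -[RHS]E /g.
    under eq_bigr do rewrite mulrBr mulrBl.
    rewrite sumrB mulr_suml; congr (_ - _).
      by apply: eq_bigr => i _; rewrite expr1 -mulrA [df i * _]mulrC mulrA.
    by apply: eq_bigr => i _; rewrite mulrAC mulrC.
  move=> b.
  have := @moment_prod _ _ f g Hg [seq j <- index_enum 'I_m | j != b] 0.
  under eq_bigr do rewrite big_filter.
  rewrite [X in X = 0 -> _](bigD1 b) //= [X in _ + X]big1 ?addr0; last first.
    move=> i hib; rewrite (bigD1 i) //= subrr mul0r mulr0.
    by [].
  rewrite expr0 mulr1 => /eqP.
  rewrite mulf_eq0 => /orP [|]; last first.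
    rewrite prodf_seq_eq0 => /hasP [j _ /= /andP [hjb]].
    by rewrite subr_eq0 eq_sym (negbTE (hf _ _ hjb)).
  rewrite /g mulf_eq0 (gt_eqF (@gibbs_gt0 _ _ f b hm)) /= subr_eq0 => /eqP.
  by [].
move=> [c hc] u v.
under eq_bigr do rewrite hc.
under [X in _ - _ * X]eq_bigr do rewrite hc.
rewrite -[X in _ * X]mulr_suml sum_gibbs // mul1r.
rewrite mulr_suml; apply/eqP; rewrite subr_eq0; apply/eqP; apply: eq_bigr => i _.
by [].
Qed.
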